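(* Fix $R\in[0,1)$ and let $r_1=\tfrac12-\tfrac R2+\tfrac{1-R^2}4$, $r_2=\tfrac12-\tfrac R2-\tfrac{1-R^2}4$. For $0<\mu<L$ with $\kappa=\mu/L$, set $\mu_1=\mu$, $L_1=\mu+r_1(L-\mu)$, $\mu_2=L-r_2(L-\mu)$, $L_2=L$, $$s=1+2\frac{\mu_1L_1\mu_2}{(L_2-\mu_1)(L_2-L_1)(L_2-\mu_2)},\qquad \sqrt m=\big(s-\sqrt{s^2-1}\big)^{1/3}$$ (the asymptotic rate factor of the optimally tuned 3-cycle heavy ball method on $[\mu_1,L_1]\cup[\mu_2,L_2]$). Then as $\kappa\to0$, $$\sqrt m=1-2\sqrt\kappa\sqrt{\frac{1-R^2/9}{1-R^2}}+o(\sqrt\kappa).$$ *)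

(* Defs.v *)
From Stdlib Require Import Reals.
Open Scope R_scope.

Definition r1 (Rr : R) : R := 1/2 - Rr/2 + (1 - Rr^2)/4.
Definition r2 (Rr : R) : R := 1/2 - Rr/2 - (1 - Rr^2)/4.

Definition mu1 (Rr mu L : R) : R := mu.
Definition L1 (Rr mu L : R) : R := mu + r1 Rr * (L - mu).
Definition mu2 (Rr mu L : R) : R := L - r2 Rr * (L - mu).
Definition L2 (Rr mu L : R) : R := L.

Definition s_param (Rr mu L : R) : R :=
  1 + 2 * (mu1 Rr mu L * L1 Rr mu L * mu2 Rr mu L) /
      ((L2 Rr mu L - mu1 Rr mu L) * (L2 Rr mu L - L1 Rr mu L) * (L2 Rr mu L - mu2 Rr mu L)).

(* sqrt m = (s - sqrt(s^2-1))^(1/3); the base is > 0 since s >= 1. *)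
Definition sqrt_m (Rr mu L : R) : R :=
  let s := s_param Rr mu L in Rpower (s - sqrt (s^2 - 1)) (1/3).

(* Main.v *)
Require Import Defs.
From Stdlib Require Import Reals.
Open Scope R_scope.
From Stdlib Require Import Lra Psatz.

Lemma cube_root (t : R) : 0 < t -> 0 < Rpower t (1/3) /\ Rpower t (1/3) ^ 3 = t.
Proof.
  intro ht. split. unfold Rpower. apply exp_pos.
  rewrite <- Rpower_pow by (unfold Rpower; apply exp_pos).
  rewrite Rpower_mult. replace (1/3 * INR 3) with 1 by (simpl; field).
  apply Rpower_1; auto.
Qed.

Lemma root_facts (s : R) : 1 <= s ->
  0 < s - sqrt (s^2-1) /\ s - sqrt (s^2-1) <= 1 /\
  (1 - (s - sqrt (s^2-1)))^2 = 2*(s-1)*(s - sqrt (s^2-1)).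
Proof.
  intro hs. assert (h0 : 0 <= s^2-1) by nra.
  pose proof (sqrt_sqrt _ h0) as hw. pose proof (sqrt_pos (s^2-1)) as hp.
  set (w := sqrt (s^2-1)) in *.
  split; [|split]; nra.
Qed.

Lemma sq_le (z y : R) : 0 <= y -> z^2 <= y^2 -> z <= y.
Proof. intros h1 h2. destruct (Rle_or_lt z y) as [|h]; auto. nra. Qed.

Lemma v_bound (u x a : R) : 0 < u -> u <= 1 -> 0 <= x -> 0 <= a ->
  (1 - u^3)^2 = 4*x^2*a^2*u^3 ->
  Rabs ((1-u) - 2/3*x*a) <= 64/9 * x^2 * a^2.
Proof.
  intros h0 h1 hx ha he.
  set (v := 1 - u). assert (hu : u = 1 - v) by (unfold v; ring).
  rewrite hu in he. clearbody v. subst u.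
  set (y := 1 - (1-v)^3).
  assert (hy : y = v*(3-3*v+v^2)) by (unfold y; ring).
  assert (hy0 : 0 <= y) by (rewrite hy; nra).
  assert (hu3 : (1-v)^3 <= 1) by nra.
  assert (hu4 : (1-v)^4 <= (1-v)^3) by nra.
  assert (hb1 : y <= 2*x*a).
  { assert (y^2 <= (2*x*a)^2).
    { unfold y; rewrite he. replace ((2*x*a)^2) with (4*x^2*a^2*1) by ring.
      apply Rmult_le_compat_l; [nra|exact hu3]. }
    apply sq_le; [nra|auto]. }
  assert (hb2 : 2*x*a*(1-v)^2 <= y).
  { assert ((2*x*a*(1-v)^2)^2 <= y^2).
    { unfold y; rewrite he.
      replace ((2*x*a*(1-v)^2)^2) with (4*x^2*a^2*(1-v)^4) by ring.
      apply Rmult_le_compat_l; [|exact hu4]. nra. }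
    apply sq_le; auto. }
  assert (hv : v <= 8/3*x*a) by nra.
  assert (hv0 : 0 <= v) by lra.
  assert (hl : 3*v - 2*x*a <= 3*v^2) by nra.
  assert (hr : -(4*x*a*v) <= 3*v - 2*x*a) by nra.
  apply Rabs_le. split.
  - assert (x*a*v <= 8/3*(x*a)^2) by nra. nra.
  - assert (v^2 <= (8/3*x*a)^2) by nra. nra.
Qed.

Definition Afun (Rr k : R) : R :=
  (k + r1 Rr * (1-k)) * (1 - r2 Rr * (1-k)) / ((1-k)^3 * ((1 - r1 Rr) * r2 Rr)).

Definition cc (Rr : R) : R := (9 - Rr^2)/(1-Rr^2).
Definition PP (Rr : R) : R := (1-Rr^2)^2/16.

Lemma s_eq (Rr mu L : R) : 0 <= Rr -> Rr < 1 -> 0 < mu -> mu < L ->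
  s_param Rr mu L = 1 + 2*(mu/L)*Afun Rr (mu/L).
Proof.
  intros h0 h1 hm hL.
  assert (hr2 : r2 Rr = (1-Rr)^2/4) by (unfold r2; field).
  assert (hr1 : 1 - r1 Rr = (1+Rr)^2/4) by (unfold r1; field).
  assert (r2 Rr <> 0) by (rewrite hr2; nra).
  assert (1 - r1 Rr <> 0) by (rewrite hr1; nra).
  set (k := mu/L). assert (hmu : mu = k*L) by (unfold k; field; lra).
  assert (hk : k < 1). { unfold k. apply (Rmult_lt_reg_r L); [lra|]. field_simplify; lra. }
  rewrite hmu. clearbody k. unfold s_param, Afun, mu1, L1, mu2, L2.
  replace (L - k*L) with (L*(1-k)) by ring.
  replace (L - (k * L + r1 Rr * (L * (1 - k)))) with (L*((1-k)*(1 - r1 Rr))) by ring.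
  replace (L - (L - r2 Rr * (L * (1 - k)))) with (L*((1-k)*r2 Rr)) by ring.
  field. repeat split; try lra; auto.
Qed.

Lemma A_bounds (Rr k : R) : 0 <= Rr -> Rr < 1 -> 0 < k -> k <= 1/2 ->
  cc Rr <= Afun Rr k /\ Afun Rr k <= cc Rr + 48 * k / PP Rr.
Proof.
  intros h0 h1 hk0 hk1.
  assert (hr2 : r2 Rr = (1-Rr)^2/4) by (unfold r2; field).
  assert (hr1 : 1 - r1 Rr = (1+Rr)^2/4) by (unfold r1; field).
  assert (hr1' : r1 Rr = (1-Rr)*(3+Rr)/4) by (unfold r1; field).
  assert (hP : (1 - r1 Rr) * r2 Rr = PP Rr) by (rewrite hr1, hr2; unfold PP; field).
  assert (hP0 : 0 < PP Rr) by (unfold PP; assert (0 < 1 - Rr^2) by nra; nra).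
  assert (hc : cc Rr * PP Rr = r1 Rr * (1 - r2 Rr)).
  { rewrite hr1', hr2. unfold cc, PP. field. nra. }
  set (a := r1 Rr) in *. set (b := r2 Rr) in *.
  assert (ha0 : 0 <= a) by (rewrite hr1'; nra).
  assert (ha1 : a <= 1) by nra.
  assert (hb0 : 0 <= b) by (rewrite hr2; nra).
  assert (hb1 : b <= 1) by (rewrite hr2; nra).
  set (d := 1 - k).
  assert (hd : 1/2 <= d) by (unfold d; lra).
  assert (hd3 : 1/8 <= d^3) by nra.
  set (F := (1-a)*(1-b) + a*b + k*(1-a)*b + a*(1-b)*(3-3*k+k^2)).
  assert (hF : (k + a*d)*(1-b*d) - d^3 * (cc Rr * PP Rr) = k*F).
  { rewrite hc. unfold F, d. ring. }
  assert (hF0 : 0 <= F) by (unfold F; assert (0 <= k*(1-a)*b) by (repeat apply Rmult_le_pos; lra);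
    assert (0 <= a*(1-b)*(3-3*k+k^2)) by (repeat apply Rmult_le_pos; nra); nra).
  assert (hF6 : F <= 6).
  { unfold F.
    assert ((1-a)*(1-b) <= 1) by nra. assert (a*b <= 1) by nra.
    assert (k*(1-a)*b <= 1) by (assert (k*(1-a) <= 1) by nra; nra).
    assert (a*(1-b) <= 1) by nra.
    assert (0 <= a*(1-b)) by nra.
    assert (3-3*k+k^2 <= 3) by nra. nra. }
  unfold Afun. fold a b d. rewrite hP.
  assert (hD : 0 < d^3 * PP Rr) by nra.
  assert (hA : (k + a*d)*(1-b*d) / (d^3 * PP Rr) = cc Rr + k*F/(d^3*PP Rr)).
  { apply (Rmult_eq_reg_r (d^3*PP Rr)); [|lra]. field_simplify; try lra. }
  rewrite hA. split.
  - assert (0 <= k*F/(d^3*PP Rr)) by (unfold Rdiv; apply Rmult_le_pos; [nra|left; apply Rinv_0_lt_compat; auto]). lra.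
  - apply Rplus_le_compat_l. unfold Rdiv.
    assert (/(d^3*PP Rr) <= 8 / PP Rr).
    { rewrite Rinv_mult. unfold Rdiv. apply Rmult_le_compat_r.
      left; apply Rinv_0_lt_compat; auto.
      replace 8 with (/ (1/8)) by field. apply Rinv_le_contravar; lra. }
    assert (0 <= /(d^3*PP Rr)) by (left; apply Rinv_0_lt_compat; auto).
    assert (k*F <= 6*k) by nra.
    apply Rle_trans with (6*k * (8/PP Rr)).
    + apply Rmult_le_compat; nra.
    + unfold Rdiv; nra.
Qed.

Theorem mainTheorem17 (Rr : R) (hR0 : 0 <= Rr) (hR1 : Rr < 1) :
  forall eps : R, eps > 0 -> exists delta : R, delta > 0 /\
    forall mu L : R, 0 < mu -> mu < L -> mu / L < delta ->
      Rabs (sqrt_m Rr mu L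
            - (1 - 2 * sqrt (mu / L) * sqrt ((1 - Rr^2 / 9) / (1 - Rr^2))))
      <= eps * sqrt (mu / L).
Proof.
  intros eps heps.
  assert (hP0 : 0 < PP Rr) by (unfold PP; assert (0 < 1 - Rr^2) by nra; nra).
  assert (hq1 : 1 <= (1 - Rr^2 / 9) / (1 - Rr^2)).
  { assert (0 < 1 - Rr^2) by nra. apply (Rmult_le_reg_r (1 - Rr^2)); auto.
    field_simplify; nra. }
  assert (hcq : cc Rr = 9 * ((1 - Rr^2 / 9) / (1 - Rr^2))).
  { unfold cc. field. nra. }
  set (q := (1 - Rr^2 / 9) / (1 - Rr^2)) in *.
  set (B := 64/9*(cc Rr + 48/PP Rr) + 16/(3*PP Rr)).
  assert (hB : 0 < B).
  { unfold B. assert (0 < 48/PP Rr) by (apply Rdiv_lt_0_compat; lra).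
    assert (0 < 16/(3*PP Rr)) by (apply Rdiv_lt_0_compat; lra). nra. }
  exists (Rmin (1/2) ((eps/B)^2)). split.
  { apply Rmin_glb_lt; [lra|]. assert (0 < eps/B) by (apply Rdiv_lt_0_compat; lra). nra. }
  intros mu L hmu hmuL hd.
  assert (hL : 0 < L) by lra.
  assert (hk0 : 0 < mu/L) by (apply Rdiv_lt_0_compat; lra).
  assert (hk1 : mu/L <= 1/2) by (pose proof (Rmin_l (1/2) ((eps/B)^2)); lra).
  assert (hk2 : mu/L < (eps/B)^2) by (pose proof (Rmin_r (1/2) ((eps/B)^2)); lra).
  unfold sqrt_m. rewrite (s_eq Rr mu L) by lra.
  set (k := mu/L) in *. clearbody k.
  destruct (A_bounds Rr k hR0 hR1 hk0 hk1) as [hA1 hA2].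
  set (A := Afun Rr k) in *. clearbody A.
  assert (hc0 : 0 < cc Rr) by lra.
  assert (hs : 1 <= 1 + 2*k*A) by nra.
  destruct (root_facts _ hs) as [ht0 [ht1 ht2]].
  set (t := 1 + 2*k*A - sqrt ((1 + 2*k*A)^2 - 1)) in *. clearbody t.
  destruct (cube_root t ht0) as [hu0 hu3].
  set (u := Rpower t (1/3)) in *. clearbody u. subst t.
  assert (hu1 : u <= 1) by nra.
  pose proof (sqrt_sqrt k (Rlt_le _ _ hk0)) as hx2.
  pose proof (sqrt_pos k) as hx0.
  set (x := sqrt k) in *. clearbody x.
  assert (hxB : x < eps/B).
  { assert (0 < eps/B) by (apply Rdiv_lt_0_compat; lra). nra. }
  assert (hx1 : x <= 1) by nra.
  assert (hA0 : 0 <= A) by lra.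
  pose proof (sqrt_sqrt A hA0) as ha2. pose proof (sqrt_pos A) as ha0.
  set (a := sqrt A) in *. clearbody a.
  assert (he : (1 - u^3)^2 = 4*x^2*a^2*u^3).
  { rewrite ht2. replace (x^2) with k by (rewrite <- hx2; ring).
    replace (a^2) with A by (rewrite <- ha2; ring). ring. }
  pose proof (v_bound u x a hu0 hu1 hx0 ha0 he) as hv.
  pose proof (sqrt_sqrt q ltac:(lra)) as hK2. pose proof (sqrt_pos q) as hK0.
  set (K := sqrt q) in *. clearbody K.
  assert (hK1 : 1 <= K) by nra.
  assert (ha3 : 3*K <= a) by (apply sq_le; nra).
  assert (hak : a - 3*K <= 8*k/PP Rr).
  { assert ((a-3*K)*(a+3*K) <= 48*k/PP Rr) by nra.
    assert (0 <= a - 3*K) by lra.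
    unfold Rdiv in *. assert (0 <= 48*k*/PP Rr).
    { apply Rmult_le_pos; [lra|left; apply Rinv_0_lt_compat; auto]. }
    nra. }
  assert (hfin : Rabs (u - (1 - 2*x*K)) <= B * x^2).
  { replace (u - (1 - 2*x*K)) with (-((1-u) - 2/3*x*a) - 2/3*x*(a - 3*K)) by lra.
    eapply Rle_trans; [apply Rabs_triang|]. rewrite !Rabs_Ropp.
    rewrite (Rabs_pos_eq (2/3*x*(a-3*K))).
    2:{ assert (0 <= x*(a-3*K)) by nra. nra. }
    assert (h1 : 64/9*x^2*a^2 <= 64/9*x^2*(cc Rr + 48/PP Rr)).
    { replace (a^2) with A by (rewrite <- ha2; ring).
      assert (48*k/PP Rr <= 48/PP Rr).
      { unfold Rdiv. assert (0 < /PP Rr) by (apply Rinv_0_lt_compat; auto). nra. }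
      apply Rmult_le_compat_l; nra. }
    assert (h2 : 2/3*x*(a-3*K) <= 16/(3*PP Rr) * x^2).
    { assert (2/3*x*(a-3*K) <= 2/3*x*(8*k/PP Rr)) by (apply Rmult_le_compat_l; nra).
      replace (2/3*x*(8*k/PP Rr)) with (16/(3*PP Rr) * (x * k)) in H by (field; lra).
      assert (0 <= 16/(3*PP Rr)) by (left; apply Rdiv_lt_0_compat; lra).
      assert (x*k <= x^2) by (rewrite <- hx2; nra).
      nra. }
    unfold B. nra. }
  eapply Rle_trans; [exact hfin|].
  assert (B*x <= eps).
  { left. apply (Rmult_lt_reg_r (/B)). apply Rinv_0_lt_compat; auto.
    replace (B*x*/B) with x by (field; lra). exact hxB. }
  nra.
Qed.
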